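(* Consider the MPC closed-loop system described in the context. Assume that $A$ is Schur stable, i.e. all eigenvalues of $A$ have modulus strictly less than $1$. Assume also that $\mathbb{E}\bigl[\bar\varphi(\bar F\bar w)\bigr]=0$ for every initial condition. Then the closed loop satisfies $$\sup_{t\in\mathbb{N}_0}\mathbb{E}_{x_0}\bigl[\|x_t\|^2\bigr]<\infty.$$
   Context: **System.** Consider the discrete-time system $x_{t+1}=Ax_t+Bu_t+Fw_t+r$ for $t\in\mathbb{N}_0$. The data are: - $x_t\in\mathbb{R}^n$, $u_t\in\mathbb{R}^m$ and $w_t\in\mathbb{R}^n$; - known matrices $A$, $B$, $F$ and a known vector $r$; - a given initial state $x_0$; - i.i.d. noise vectors $w_t$, possibly with unbounded support, with mean $\mu_w$ and finite covariance $\Sigma_w$; - the input constraint $\|u_t\|_\infty\le U_{\max}$, where $U_{\max}>0$. **Stacked notation.** Fix a horizon $N\in\mathbb{N}$. Define - $\bar x=(x_0^\mathsf{T},\dots,x_N^\mathsf{T})^\mathsf{T}$, $\bar u=(u_0^\mathsf{T},\dots,u_{N-1}^\mathsf{T})^\mathsf{T}$, $\bar w=(w_0^\mathsf{T},\dots,w_{N-1}^\mathsf{T})^\mathsf{T}$, and $\bar r=(r^\mathsf{T},\dots,r^\mathsf{T})^\mathsf{T}\in\mathbb{R}^{Nn}$; - $\bar F=\operatorname{diag}(F,\dots,F)$ and $\bar A=(I,A^\mathsf{T},\dots,(A^N)^\mathsf{T})^\mathsf{T}$; - $\bar B$ is the block matrix with blocks $A^{k-1-j}B$ for $j<k$ and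 $0$ otherwise ($k=0,\dots,N$, $j=0,\dots,N-1$); - $\bar D$ is the block matrix with blocks $A^{k-1-j}$ for $j<k$ and $0$ otherwise. Then $\bar x=\bar Ax_0+\bar B\bar u+\bar D\bar F\bar w+\bar D\bar r$. Let $Q_0,\dots,Q_N$ and $R_0,\dots,R_{N-1}$ be symmetric positive definite, and set $\bar Q=\operatorname{diag}(Q_0,\dots,Q_N)$ and $\bar R=\operatorname{diag}(R_0,\dots,R_{N-1})$. **Saturated noise measurements.** Let $0<\phi_{\max}\le U_{\max}$, and let $\varphi_i^j:\mathbb{R}\to\mathbb{R}$ ($i=0,\dots,N-1$, $j=1,\dots,n$) be functions bounded in absolute value by $\phi_{\max}$. Set $\varphi_i(Fw_i)=(\varphi_i^1(F_1w_i),\dots,\varphi_i^n(F_nw_i))^\mathsf{T}$, with $F_j$ the $j$-th row of $F$, and $\bar\varphi(\bar F\bar w)=(\varphi_0(Fw_0)^\mathsf{T},\dots,\varphi_{N-1}(Fw_{N-1})^\mathsf{T})^\mathsf{T}$. **Finite-horizon problem.** For a given initial state $x$, the finite-horizon problem is to minimize $\mathbb{E}_{x}[\bar x^\mathsf{T}\bar Q\bar x+\bar u^\mathsf{T}\bar R\bar u]$, with $x_0=x$, over policies $\bar u=\bar G\bar\varphi(\bar F\bar w)+\bar d$. Here $\bar d\in\mathbb{R}^{Nm}$, and $\bar G\in\mathbb{R}^{Nm\times Nn}$ is strictly block lower triangular with $m\times n$ blocks. The constraint is $|\bar d_i|+\|\bar G_i\|_1\phi_{\max}\le U_{\max}$ for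 $i=1,\dots,Nm$, where $\bar G_i$ is the $i$-th row of $\bar G$; equivalently, $\|\bar Gv+\bar d\|_\infty\le U_{\max}$ whenever $\|v\|_\infty\le\phi_{\max}$. **MPC closed loop.** At each time $t$, the finite-horizon problem is solved with initial state $x_t$, giving an optimal solution $(\bar G^*,\bar d^* )$ that depends on $x_t$. Let $\bar d^*_{0|t}\in\mathbb{R}^m$ denote the first $m$ entries of $\bar d^*$. The control $u_t=\bar d^*_{0|t}$ is applied, so the closed loop is $$x_{t+1}=Ax_t+B\bar d^*_{0|t}+Fw_t+r,\qquad t\in\mathbb{N}_0.$$ *)

(* Defs.v *)
From HB Require Import structures.
From mathcomp Require Import all_boot all_order all_algebra.
From mathcomp Require Import all_classical all_reals all_analysis.
From mathcomp Require Import complex.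
Set Implicit Arguments. Unset Strict Implicit. Unset Printing Implicit Defensive.
Import Order.TTheory GRing.Theory Num.Theory.
Local Open Scope classical_set_scope.
Local Open Scope ring_scope.

Section Defs.
Context {R : realType}.

Definition sqnorm {n : nat} (v : 'cV[R]_n) : R := \sum_(i < n) v i 0 ^+ 2.

Definition qform {n : nat} (M : 'M[R]_n) (v : 'cV[R]_n) : R := (v^T *m M *m v) 0 0.

Definition posdef {n : nat} (M : 'M[R]_n) : Prop :=
  M^T = M /\ forall v : 'cV[R]_n, v != 0 -> 0 < qform M v.

Definition schur_stable {n : nat} (A : 'M[R]_n) : Prop :=
  forall z : R[i], root (char_poly (map_mx (real_complex R) A)) z -> `|z| < 1.

Context {d : measure_display} {T : measurableType d}.

Definition box_event {n : nat} (w : T -> 'cV[R]_n) (B : 'I_n -> set R) : set T :=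
  [set om | forall j, B j (w om j 0)].

(* Independence/identical distribution are
   stated on boxes prod_j B_j (B_j Borel), which form a pi-system generating
   the Borel sigma-algebra of R^n. *)
Definition iid_finite_cov (P : probability T R) {n : nat} (w : nat -> T -> 'cV[R]_n) : Prop :=
  [/\ (forall t (j : 'I_n), measurable_fun setT (fun om => w t om j 0)),
      (forall t (B : 'I_n -> set R), (forall j, measurable (B j)) ->
          P (box_event (w t) B) = P (box_event (w 0%N) B)),
      (forall (s : seq nat) (B : nat -> 'I_n -> set R), uniq s ->
          (forall t j, measurable (B t j)) ->
          P (\bigcap_(t in [set` s]) box_event (w t) (B t))
          = \big[*%E/1%E]_(t <- s) P (box_event (w t) (B t)))
    & (forall t (j : 'I_n), (\int[P]_om ((w t om j 0) ^+ 2)%:E < +oo)%E)].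

Section FiniteHorizon.
Variables (n m N : nat) (A : 'M[R]_n) (B : 'M[R]_(n, m)) (F : 'M[R]_n) (r : 'cV[R]_n).
Variables (Q : 'I_N.+1 -> 'M[R]_n) (Rw : 'I_N -> 'M[R]_m).
Variables (Umax phimax : R) (phi : 'I_N -> 'I_n -> R -> R).
Variables (P : probability T R) (w : nat -> T -> 'cV[R]_n).

Definition sat_vec (i : 'I_N) (y : 'cV[R]_n) : 'cV[R]_n := \col_j phi i j (y j 0).

(* block form of  ubar = Gbar varphibar(Fbar wbar) + dbar :
   G k j is the (k,j) m x n block of Gbar, d k the k-th m-block of dbar *)
Definition policy_input (G : 'I_N -> 'I_N -> 'M[R]_(m, n)) (dd : 'I_N -> 'cV[R]_m)
  (k : 'I_N) (om : T) : 'cV[R]_m :=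
  \sum_(j < N) G k j *m sat_vec j (F *m w j om) + dd k.

Definition ext_input (u : 'I_N -> 'cV[R]_m) (k : nat) : 'cV[R]_m :=
  if insub k is Some k' then u k' else 0.

Fixpoint traj (xi : 'cV[R]_n) (u : nat -> 'cV[R]_m) (om : T) (k : nat) : 'cV[R]_n :=
  match k with
  | 0%N => xi
  | k'.+1 => A *m traj xi u om k' + B *m u k' + F *m w k' om + r
  end.

Definition fh_cost (xi : 'cV[R]_n) G dd (om : T) : R :=
  \sum_(k < N.+1)
      qform (Q k) (traj xi (ext_input (fun k => policy_input G dd k om)) om k)
  + \sum_(k < N) qform (Rw k) (policy_input G dd k om).

Definition fh_J (xi : 'cV[R]_n) G dd : \bar R := \int[P]_om (fh_cost xi G dd om)%:E.

Definition fh_feasible (G : 'I_N -> 'I_N -> 'M[R]_(m, n)) (dd : 'I_N -> 'cV[R]_m) : Prop :=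
  (forall k j : 'I_N, (k <= j)%N -> G k j = 0) /\
  (forall (k : 'I_N) (i : 'I_m),
      `|dd k i 0| + (\sum_(j < N) \sum_(l < n) `|G k j i l|) * phimax <= Umax).

Definition fh_optimal (xi : 'cV[R]_n) G dd : Prop :=
  fh_feasible G dd /\
  (forall G' dd', fh_feasible G' dd' -> (fh_J xi G dd <= fh_J xi G' dd')%E).

Fixpoint cl_state (dstar : 'cV[R]_n -> 'cV[R]_m) (x0 : 'cV[R]_n) (t : nat) (om : T)
  : 'cV[R]_n :=
  match t with
  | 0%N => x0
  | t'.+1 => A *m cl_state dstar x0 t' om + B *m dstar (cl_state dstar x0 t' om)
             + F *m w t' om + r
  end.

End FiniteHorizon.
End Defs.

(* Main.v *)
Require Import Defs.
From HB Require Import structures.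
From mathcomp Require Import all_boot all_order all_algebra.
From mathcomp Require Import all_classical all_reals all_analysis.
From mathcomp Require Import complex.
From mathcomp Require Import ring lra.
From mathcomp Require Import measurable_realfun.
Import Order.TTheory GRing.Theory Num.Theory.
Local Open Scope classical_set_scope.
Local Open Scope ring_scope.
Lemma geom_step (C : numFieldType) (z : C) (y e : nat -> C) (Ce : C) :
  `|z| < 1 -> (forall k, y k.+1 = z * y k + e k) ->
  (forall K, \sum_(k < K) `|e k| <= Ce) ->
  forall K, \sum_(k < K) `|y k| <= (`|y 0%N| + Ce) / (1 - `|z|).
Proof.
move=> hz hy he K.
have h1 : 0 < 1 - `|z| by rewrite subr_gt0.
have Ce0 : 0 <= Ce by have := he 0%N; rewrite big_ord0.
rewrite ler_pdivlMr //.
have hS : forall K, \sum_(k < K) `|y k| <= \sum_(k < K.+1) `|y k|.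
  by move=> K'; rewrite big_ord_recr /= lerDl.
case: K => [|K]; first by rewrite big_ord0 mul0r addr_ge0.
set S := \sum_(k < K.+1) `|y k|.
have : S <= `|y 0%N| + `|z| * S + Ce.
  rewrite {1}/S big_ord_recl /= -addrA lerD2l.
  apply: (le_trans (y := \sum_(k < K) (`|z| * `|y k| + `|e k|))).
    apply: ler_sum => k _; rewrite hy -normrM; exact: ler_normD.
  rewrite big_split /= -mulr_sumr lerD //; last exact: he.
  by rewrite ler_wpM2l //; exact: hS.
move=> H; rewrite mulrBr mulr1 lerBlDr.
by apply: (le_trans H); rewrite addrAC [`|z| * _]mulrC.
Qed.

Lemma pow_sum (C : numFieldType) n (Ac : 'M[C]_n) (rs : seq C) :
  (forall z, z \in rs -> `|z| < 1) ->
  forall M : 'M[C]_n, (\prod_(z <- rs) (Ac - z%:M)) * M = 0 ->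
  forall i j, exists Cb, forall K, \sum_(k < K) `|(Ac ^+ k * M) i j| <= Cb.
Proof.
have cAs : forall a : C, GRing.comm Ac a%:M.
  by move=> a; rewrite /GRing.comm -!mulmxE scalar_mxC.
have cs : forall a b : C, GRing.comm (Ac - a%:M) (Ac - b%:M).
  move=> a b; apply: GRing.commrB.
    apply: GRing.commr_sym; apply: GRing.commrB; [exact: GRing.commr_refl|exact: cAs].
  apply: GRing.commr_sym; apply: GRing.commrB; first exact/GRing.commr_sym/cAs.
  by rewrite /GRing.comm -!mulmxE -!scalar_mxM mulrC.
elim: rs => [|z rs IH] hrs M hM i j.
  rewrite big_nil mul1r in hM; exists 0 => K.
  by rewrite hM big1 // => k _; rewrite mulr0 mxE normr0.
rewrite big_cons in hM.
have hz : `|z| < 1 by apply: hrs; rewrite inE eqxx.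
have hrs' : forall w, w \in rs -> `|w| < 1.
  by move=> w hw; apply: hrs; rewrite inE hw orbT.
have hM' : (\prod_(w <- rs) (Ac - w%:M)) * ((Ac - z%:M) * M) = 0.
  rewrite mulrA.
  have -> : \prod_(w <- rs) (Ac - w%:M) * (Ac - z%:M)
           = (Ac - z%:M) * \prod_(w <- rs) (Ac - w%:M).
    by apply/esym/GRing.commr_prod => w _; exact: cs.
  exact: hM.
have [Cb' hCb'] := IH hrs' _ hM' i j.
exists ((`|(Ac ^+ 0 * M) i j| + Cb') / (1 - `|z|)) => K.
apply: (@geom_step C z (fun k => (Ac ^+ k * M) i j) (fun k => (Ac ^+ k * ((Ac - z%:M) * M)) i j) Cb' hz) => //.
move=> k.
have E : Ac ^+ k * (z%:M * M) = z *: (Ac ^+ k * M).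
  by rewrite -!mulmxE mulmxA scalar_mxC -mulmxA mul_scalar_mx.
rewrite mulrBl mulrBr E exprSr -mulrA !mxE.
by rewrite addrCA subrr addr0.
Qed.

Local Open Scope complex_scope.
Local Open Scope ring_scope.

Lemma map_mxX (R : realType) n (A : 'M[R]_n) k :
  map_mx (real_complex R) (A ^+ k) = (map_mx (real_complex R) A) ^+ k.
Proof.
elim: k => [|k IH]; first by rewrite !expr0 map_mx1.
by rewrite !exprS map_mxM IH.
Qed.

Lemma normC_real (R : realType) (x : R) : `|x%:C| = (`|x|)%:C.
Proof. by rewrite normc_def /= expr0n /= addr0 sqrtr_sqr. Qed.

Lemma leC_Re (R : realType) (x : R) (c : R[i]) : x%:C <= c -> x <= complex.Re c.
Proof. by rewrite lecE => /andP[_]. Qed.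

Lemma schur_sum (R : realType) n (A : 'M[R]_n) : schur_stable A ->
  exists Cb : R, forall K i j, \sum_(k < K) `|(A ^+ k) i j| <= Cb.
Proof.
case: n A => [|n'] A hA.
  by exists 0 => K [].
set Ac := map_mx (real_complex R) A.
have [rs hrs] := closed_field_poly_normal (char_poly Ac).
rewrite (monicP (char_poly_monic Ac)) scale1r in hrs.
have hrt : forall z, z \in rs -> `|z| < 1.
  by move=> z hz; apply: hA; rewrite -/Ac hrs root_prod_XsubC.
have hP : (\prod_(z <- rs) (Ac - z%:M)) * 1 = 0.
  rewrite mulr1 -(Cayley_Hamilton Ac) hrs rmorph_prod.
  by apply: eq_bigr => z _; rewrite rmorphB /= horner_mx_X horner_mx_C.
have H := @pow_sum _ _ Ac rs hrt _ hP.
have [f hf] := boolp.choice (fun p : 'I_n'.+1 * 'I_n'.+1 => H p.1 p.2).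
exists (\sum_i \sum_j complex.Re (f (i, j))) => K i j.
have f0 : forall p, 0 <= complex.Re (f p).
  by move=> p; apply: leC_Re; have := hf p 0%N; rewrite big_ord0.
have h1 : \sum_(k < K) `|(A ^+ k) i j| <= complex.Re (f (i, j)).
  apply: leC_Re; rewrite rmorph_sum /=.
  apply: le_trans (hf (i, j) K); rewrite le_eqVlt; apply/orP; left; apply/eqP/eq_bigr => k _.
  by rewrite /= mulr1 -map_mxX mxE normC_real.
apply: (le_trans h1).
rewrite (bigD1 i) //= (bigD1 j) //= -addrA lerDl.
apply: addr_ge0; first by apply: sumr_ge0 => *.
by apply: sumr_ge0 => *; apply: sumr_ge0 => *.
Qed.

Local Close Scope complex_scope.

Set Implicit Arguments. Unset Strict Implicit.
Local Open Scope ring_scope.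

Lemma cs_w (R : realType) K (a b : 'I_K -> R) : (forall k, 0 <= a k) ->
  (\sum_k a k * b k) ^+ 2 <= (\sum_k a k) * \sum_k a k * b k ^+ 2.
Proof.
move=> a0.
have E1 : (\sum_k a k * b k) ^+ 2 = \sum_k \sum_l (a k * b k) * (a l * b l).
  by rewrite expr2 mulr_suml; apply: eq_bigr => k _; rewrite mulr_sumr.
have E2 : (\sum_k a k) * \sum_k a k * b k ^+ 2 = \sum_k \sum_l a k * (a l * b l ^+ 2).
  by rewrite mulr_suml; apply: eq_bigr => k _; rewrite mulr_sumr.
have E3 : (\sum_k a k) * \sum_k a k * b k ^+ 2 = \sum_k \sum_l a l * (a k * b k ^+ 2).
  rewrite mulrC mulr_suml; apply: eq_bigr => k _; rewrite mulr_sumr.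
  by apply: eq_bigr => l _; rewrite mulrC.
have H : (\sum_k a k * b k) ^+ 2 + (\sum_k a k * b k) ^+ 2 <=
   ((\sum_k a k) * \sum_k a k * b k ^+ 2) + ((\sum_k a k) * \sum_k a k * b k ^+ 2).
  rewrite [X in _ <= X + _]E2 [X in _ <= _ + X]E3 E1 -!big_split /=.
  apply: ler_sum => k _; rewrite -!big_split /=; apply: ler_sum => l _.
  have := mulr_ge0 (mulr_ge0 (a0 k) (a0 l)) (sqr_ge0 (b k - b l)).
  move=> h; nra.
lra.
Qed.

Definition vn (R : realType) k (v : 'cV[R]_k) : R := \sum_i `|v i 0|.
Definition mn (R : realType) p q (M : 'M[R]_(p, q)) : R := \sum_i \sum_j `|M i j|.
Arguments vn {R k}. Arguments mn {R p q}.

Lemma vn_ge0 (R : realType) k (v : 'cV[R]_k) : 0 <= vn v.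
Proof. by apply: sumr_ge0 => *. Qed.

Lemma mn_ge0 (R : realType) p q (M : 'M[R]_(p, q)) : 0 <= mn M.
Proof. by apply: sumr_ge0 => *; apply: sumr_ge0 => *. Qed.

Lemma vn_entry (R : realType) k (v : 'cV[R]_k) i : `|v i 0| <= vn v.
Proof.
rewrite /vn (bigD1 i) //= lerDl; by apply: sumr_ge0 => *.
Qed.

Lemma mn_entry (R : realType) p q (M : 'M[R]_(p, q)) i j : `|M i j| <= mn M.
Proof.
rewrite /mn (bigD1 i) //= (bigD1 j) //= -addrA lerDl.
by apply: addr_ge0; apply: sumr_ge0 => *; [|apply: sumr_ge0 => *].
Qed.

Lemma vnD (R : realType) k (u v : 'cV[R]_k) : vn (u + v) <= vn u + vn v.
Proof.
rewrite /vn -big_split /=; apply: ler_sum => i _; rewrite mxE; exact: ler_normD.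
Qed.

Lemma vn_sum (R : realType) k K (f : 'I_K -> 'cV[R]_k) :
  vn (\sum_(s < K) f s) <= \sum_(s < K) vn (f s).
Proof.
rewrite /vn exchange_big /=; apply: ler_sum => i _.
rewrite summxE; exact: ler_norm_sum.
Qed.

Lemma vn_mul (R : realType) p q (M : 'M[R]_(p, q)) (v : 'cV[R]_q) :
  vn (M *m v) <= mn M * vn v.
Proof.
rewrite /vn /mn mulr_suml; apply: ler_sum => i _; rewrite mxE.
apply: (le_trans (ler_norm_sum _ _ _)); rewrite mulr_suml.
apply: ler_sum => l _; rewrite normrM; apply: ler_wpM2l => //.
exact: vn_entry.
Qed.

Lemma sqnorm_vn (R : realType) k (v : 'cV[R]_k) : sqnorm v <= vn v ^+ 2.
Proof.
rewrite /sqnorm expr2 /vn mulr_suml; apply: ler_sum => i _.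
rewrite -real_normK ?num_real // expr2 ler_wpM2l //; exact: vn_entry.
Qed.

Section CL.
Variables (R : realType) (d : measure_display) (T : measurableType d) (n m : nat).
Variables (A : 'M[R]_n) (B : 'M[R]_(n, m)) (F : 'M[R]_n) (r : 'cV[R]_n).
Variables (w : nat -> T -> 'cV[R]_n) (dstar : 'cV[R]_n -> 'cV[R]_m) (x0 : 'cV[R]_n).

Definition vin (s : nat) (om : T) : 'cV[R]_n :=
  B *m dstar (cl_state A B F r w dstar x0 s om) + F *m w s om + r.

Lemma cl_closed t om : cl_state A B F r w dstar x0 t om =
  A ^+ t *m x0 + \sum_(k < t) A ^+ k *m vin (t - k.+1)%N om.
Proof.
have mX : forall k, A *m A ^+ k = A ^+ k.+1 by move=> k; rewrite exprS mulmxE.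
elim: t => [|t IH]; first by rewrite expr0 mul1mx big_ord0 addr0.
have -> : A ^+ t.+1 *m x0 + \sum_(k < t.+1) A ^+ k *m vin (t.+1 - k.+1)%N om
   = A *m (A ^+ t *m x0 + \sum_(k < t) A ^+ k *m vin (t - k.+1)%N om) + vin t om.
  rewrite big_ord_recl /= subSS subn0 expr0 mul1mx mulmxDr mulmxA mX.
  rewrite mulmx_sumr.
  have -> : \sum_(i < t) A ^+ bump 0 i *m vin (t.+1 - (bump 0 i).+1) om
     = \sum_(i < t) A *m (A ^+ i *m vin (t - i.+1) om).
    by apply: eq_bigr => k _; rewrite mulmxA mX.
  set S := \sum_(i < t) _.
  rewrite /vin.
  by rewrite [_ + _ + r + S]addrC addrA.
rewrite -IH /=; by rewrite /vin !addrA.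
Qed.
End CL.
Arguments vin {R d T n m}.

Local Open Scope classical_set_scope.
Lemma id_moment (R : realType) (d : measure_display) (T : measurableType d)
  (P : probability T R) n (w : nat -> T -> 'cV[R]_n) :
  iid_finite_cov P w -> forall t j,
  (\int[P]_om ((w t om j 0) ^+ 2)%:E = \int[P]_om ((w 0%N om j 0) ^+ 2)%:E)%E.
Proof.
case=> mw idw _ _ t j.
pose X := fun s om => w s om j 0.
have mX : forall s, measurable_fun setT (X s) by move=> s; exact: mw.
pose f := fun y : R => ((y ^+ 2)%:E : \bar R).
have mf : measurable_fun [set: R] (fun y : R => ((y ^+ 2)%:E : \bar R)).
  apply/measurable_realfun.measurable_EFinP.
  exact: (measurable_realfun.measurable_funX 2 (@measurable_id _ R setT)).
have f0 : {in setT, forall y, (0 <= f y)%E}.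
  by move=> y _; rewrite /f lee_fin sqr_ge0.
have h0 := ge0_integral_pushforward (mX 0%N) P measurableT mf f0.
have ht := ge0_integral_pushforward (mX t) P measurableT mf f0.
rewrite preimage_setT in h0 ht.
transitivity (\int[P]_(x in setT) (f \o X t) x)%E; first by [].
transitivity (\int[P]_(x in setT) (f \o X 0%N) x)%E; last by [].
rewrite -ht -h0; apply: eq_measure_integral => A mA _.
rewrite /pushforward.
pose Bx := fun j' : 'I_n => if j' == j then A else setT.
have mB : forall j', measurable (Bx j').
  by move=> j'; rewrite /Bx; case: eqP.
have eB : forall s, box_event (w s) Bx = X s @^-1` A.
  move=> s; apply/seteqP; split => om /=.
    by move/(_ j); rewrite /Bx eqxx.
  by move=> hA j'; rewrite /Bx; case: eqP => [->|].
by have := idw t Bx mB; rewrite !eB.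
Qed.

Set Implicit Arguments. Unset Strict Implicit.
Local Open Scope ring_scope.
Lemma sum_const_ord (R : realType) k (c : R) : \sum_(i < k) c = k%:R * c.
Proof. by rewrite sumr_const card_ord mulr_natl. Qed.

Lemma pw_bound (R : realType) (d : measure_display) (T : measurableType d) (n m : nat)
  (A : 'M[R]_n) (B : 'M[R]_(n, m)) (F : 'M[R]_n) (r : 'cV[R]_n)
  (w : nat -> T -> 'cV[R]_n) (dstar : 'cV[R]_n -> 'cV[R]_m) (x0 : 'cV[R]_n)
  (Umax Ca : R) : 0 <= Umax ->
  (forall xi i, `|dstar xi i 0| <= Umax) ->
  (forall K, \sum_(k < K) mn (A ^+ k) <= Ca) ->
  forall t om, sqnorm (cl_state A B F r w dstar x0 t om) <=
    2 * (Ca * (vn x0 + (mn B * (m%:R * Umax) + vn r))) ^+ 2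
    + 2 * mn F ^+ 2 * Ca * \sum_(k < t) mn (A ^+ k) *
        (n%:R * \sum_j (w (t - k.+1)%N om j 0) ^+ 2).
Proof.
move=> U0 hU hA t om.
have Ca0 : 0 <= Ca by have := hA 0%N; rewrite big_ord0.
set beta := mn B * (m%:R * Umax) + vn r.
set fF := mn F.
have beta0 : 0 <= beta by rewrite addr_ge0 ?vn_ge0 // mulr_ge0 ?mn_ge0 // mulr_ge0.
have fF0 : 0 <= fF by exact: mn_ge0.
have hat : mn (A ^+ t) <= Ca.
  apply: le_trans (hA t.+1); rewrite big_ord_recr /= lerDr.
  by apply: sumr_ge0 => *; exact: mn_ge0.
have hv : forall s, vn (vin A B F r w dstar x0 s om) <= beta + fF * vn (w s om).
  move=> s; rewrite /vin.
  apply: (le_trans (vnD _ _)); rewrite /beta addrAC lerD2r.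
  apply: (le_trans (vnD _ _)); apply: lerD; last exact: vn_mul.
  apply: (le_trans (vn_mul _ _)); apply: ler_wpM2l; first exact: mn_ge0.
  rewrite /vn -sum_const_ord; apply: ler_sum => i _; exact: hU.
set W := fun k : 'I_t => vn (w (t - k.+1)%N om).
set al := fun k : 'I_t => mn (A ^+ k).
have al0 : forall k, 0 <= al k by move=> k; exact: mn_ge0.
have hal : \sum_k al k <= Ca by exact: hA.
have h1 : vn (cl_state A B F r w dstar x0 t om) <=
    Ca * vn x0 + (beta * Ca + fF * \sum_k al k * W k).
  rewrite cl_closed; apply: (le_trans (vnD _ _)); apply: lerD.
    apply: (le_trans (vn_mul _ _)); apply: ler_wpM2r => //; exact: vn_ge0.
  apply: (le_trans (vn_sum _)).
  apply: (le_trans (y := \sum_k al k * (beta + fF * W k))).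
    apply: ler_sum => k _; apply: (le_trans (vn_mul _ _)).
    apply: ler_wpM2l; [exact: mn_ge0 | exact: hv].
  rewrite (eq_bigr (fun k => beta * al k + fF * (al k * W k))); last first.
    by move=> k _; rewrite mulrDr mulrCA mulrC.
  rewrite big_split /= -mulr_sumr -mulr_sumr lerD2r.
  by apply: ler_wpM2l.
have W0 : forall k, 0 <= W k by move=> k; exact: vn_ge0.
have h3 : (\sum_k al k * W k) ^+ 2 <= Ca * \sum_k al k * W k ^+ 2.
  apply: (le_trans (cs_w _ al0)); apply: ler_wpM2r => //.
  by apply: sumr_ge0 => k _; rewrite mulr_ge0 ?sqr_ge0.
have h4 : forall k, W k ^+ 2 <= n%:R * \sum_j (w (t - k.+1)%N om j 0) ^+ 2.
  move=> k; rewrite /W /vn.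
  have := @cs_w R n (fun _ => 1) (fun j => `|w (t - k.+1)%N om j 0|) (fun _ => ler01).
  rewrite sum_const_ord mulr1.
  under eq_bigr do rewrite mul1r.
  move=> h; apply: (le_trans h); apply: ler_wpM2l => //.
  by apply: ler_sum => j _; rewrite mul1r real_normK ?num_real.
set S := \sum_k al k * W k.
have S0 : 0 <= S by apply: sumr_ge0 => k _; rewrite mulr_ge0.
have h5 : \sum_k al k * W k ^+ 2 <=
    \sum_(k < t) mn (A ^+ k) * (n%:R * \sum_j (w (t - k.+1)%N om j 0) ^+ 2).
  by apply: ler_sum => k _; apply: ler_wpM2l => //; exact: h4.
have hx0 := vn_ge0 x0.
have hxt := vn_ge0 (cl_state A B F r w dstar x0 t om).
apply: (le_trans (sqnorm_vn _)).
set X := vn _ in h1 hxt *.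
set Y := \sum_(k < t) _ in h5 *.
have hD : X <= Ca * (vn x0 + beta) + fF * S.
  apply: (le_trans h1); rewrite mulrDr addrA lerD2r lerD2l mulrC //.
have e1 : X ^+ 2 <= 2 * (Ca * (vn x0 + beta)) ^+ 2 + 2 * fF ^+ 2 * S ^+ 2.
  set D := Ca * (vn x0 + beta) in hD *.
  have hD0 : 0 <= D by rewrite mulr_ge0 // addr_ge0.
  have hXX := ler_pM hxt hxt hD hD.
  have hq := sqr_ge0 (D - fF * S).
  rewrite !expr2 in hq *; clearbody D X S fF; nra.
apply: (le_trans e1); rewrite lerD2l -!mulrA ler_wpM2l // ler_wpM2l ?sqr_ge0 //.
apply: ler_wpM2l => //; apply: (le_trans h3); apply: ler_wpM2l => //; exact: h5.
Qed.

Section Meas.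
Variables (R : realType) (d : measure_display) (T : measurableType d).

Lemma mv_mul p q (M : 'M[R]_(p, q)) (f : T -> 'cV[R]_q) :
  (forall l, measurable_fun setT (fun om => f om l 0)) ->
  forall i, measurable_fun setT (fun om => (M *m f om) i 0).
Proof.
move=> hf i.
have -> : (fun om => (M *m f om) i 0) = (fun om => \sum_l M i l * f om l 0).
  by apply: boolp.funext => om; rewrite mxE.
apply: measurable_sum => l.
exact: (@measurable_funM _ _ _ _ (cst (M i l)) (fun om => f om l 0) (measurable_cst _) (hf l)).
Qed.

Lemma mv_add p (f g : T -> 'cV[R]_p) :
  (forall l, measurable_fun setT (fun om => f om l 0)) ->
  (forall l, measurable_fun setT (fun om => g om l 0)) ->
  forall i, measurable_fun setT (fun om => (f om + g om) i 0).
Proof.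
move=> hf hg i.
have -> : (fun om => (f om + g om) i 0) = (fun om => f om i 0 + g om i 0).
  by apply: boolp.funext => om; rewrite mxE.
exact: (@measurable_funD _ _ _ _ (fun om => f om i 0) (fun om => g om i 0) (hf i) (hg i)).
Qed.

Lemma m_cl n m (A : 'M[R]_n) (B : 'M[R]_(n, m)) (F : 'M[R]_n) (r : 'cV[R]_n)
  (w : nat -> T -> 'cV[R]_n) (dstar : 'cV[R]_n -> 'cV[R]_m) (x0 : 'cV[R]_n) :
  (forall t j, measurable_fun setT (fun om => w t om j 0)) ->
  (forall t i, measurable_fun setT
      (fun om => dstar (cl_state A B F r w dstar x0 t om) i 0)) ->
  forall t i, measurable_fun setT (fun om => cl_state A B F r w dstar x0 t om i 0).
Proof.
move=> mw mu; elim=> [|t IH] i /=; first exact: measurable_cst.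
apply: mv_add => [l|l]; last exact: measurable_cst.
apply: mv_add => [l'|l']; last exact: mv_mul.
by apply: mv_add => l''; apply: mv_mul.
Qed.

Local Open Scope ereal_scope.
Lemma int_lin (P : probability T R) (I : Type) (s : seq I) (a : I -> R)
  (g : I -> T -> R) (e : I -> R) :
  (forall k, (0 <= a k)%R) -> (forall k om, (0 <= g k om)%R) ->
  (forall k, measurable_fun setT (g k)) ->
  (forall k, \int[P]_om (g k om)%:E = (e k)%:E) ->
  \int[P]_om (\sum_(k <- s) a k * g k om)%:E = (\sum_(k <- s) a k * e k)%:E.
Proof.
move=> a0 g0 mg ig.
under eq_integral do rewrite -sumEFin.
rewrite ge0_integral_sum //; last first.
- by move=> k om _; rewrite lee_fin mulr_ge0.
- move=> k; apply/measurable_EFinP.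
  exact: (@measurable_funM _ _ _ _ (cst (a k)) (g k) (measurable_cst _) (mg k)).
rewrite -sumEFin; apply: eq_bigr => k _.
under eq_integral do rewrite EFinM.
rewrite ge0_integralZl_EFin //.
- by rewrite ig EFinM.
- by move=> om _; rewrite lee_fin.
- exact/measurable_EFinP.
Qed.

Lemma int_cst_plus (P : probability T R) (c : R) (g : T -> R) :
  (0 <= c)%R -> (forall om, (0 <= g om)%R) -> measurable_fun setT g ->
  \int[P]_om (c + g om)%:E = c%:E + \int[P]_om (g om)%:E.
Proof.
move=> c0 g0 mg.
under eq_integral do rewrite EFinD.
rewrite ge0_integralD //.
- rewrite integral_cst //; congr (_ + _); rewrite -[RHS]mule1; congr (_ * _); exact: probability_setT.
all: try by move=> om _; rewrite lee_fin.
all: try exact/measurable_EFinP.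
Qed.
End Meas.

Local Open Scope ring_scope.
Theorem proposition3
  (R : realType) (d : measure_display) (T : measurableType d) (P : probability T R)
  (n m N : nat) (hN : (0 < N)%N)
  (A : 'M[R]_n) (B : 'M[R]_(n, m)) (F : 'M[R]_n) (r : 'cV[R]_n)
  (w : nat -> T -> 'cV[R]_n)
  (Q : 'I_N.+1 -> 'M[R]_n) (Rw : 'I_N -> 'M[R]_m)
  (Umax phimax : R) (phi : 'I_N -> 'I_n -> R -> R)
  (dstar : 'cV[R]_n -> 'cV[R]_m) (x0 : 'cV[R]_n) :
  iid_finite_cov P w ->
  (forall k, posdef (Q k)) -> (forall k, posdef (Rw k)) ->
  0 < Umax -> 0 < phimax -> phimax <= Umax ->
  (forall i j s, `|phi i j s| <= phimax) ->
  (forall i j, measurable_fun setT (phi i j)) ->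
  (forall xi : 'cV[R]_n, exists G dd,
      fh_optimal A B F r Q Rw Umax phimax phi P w xi G dd /\
      dstar xi = dd (Ordinal hN)) ->
  (forall t (i : 'I_m), measurable_fun setT
      (fun om => dstar (cl_state A B F r w dstar x0 t om) i 0)) ->
  schur_stable A ->
  (forall (i : 'I_N) (j : 'I_n), (\int[P]_om (phi i j ((F *m w i om) j 0))%:E = 0)%E) ->
  exists M : R, forall t : nat,
    (\int[P]_om (sqnorm (cl_state A B F r w dstar x0 t om))%:E <= M%:E)%E.
Proof.
move=> hiid _ _ hU0 hphi0 _ _ _ hopt hmu hA _.
have hU : forall xi i, `|dstar xi i 0| <= Umax.
  move=> xi i; have [G [dd [[[_ hfe] _] ->]]] := hopt xi.
  apply: le_trans (hfe (Ordinal hN) i); rewrite lerDl mulr_ge0 ?(ltW hphi0) //.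
  by apply: sumr_ge0 => *; apply: sumr_ge0 => *.
have U0 : 0 <= Umax := ltW hU0.
have [Cb hCb] := @schur_sum _ _ A hA.
pose Ca := \sum_(i < n) \sum_(j < n) Cb.
have hAs : forall K, \sum_(k < K) mn (A ^+ k) <= Ca.
  move=> K; rewrite /mn exchange_big /=; apply: ler_sum => i _.
  by rewrite exchange_big /=; apply: ler_sum => j _; exact: hCb.
have Ca0 : 0 <= Ca by have := hAs 0%N; rewrite big_ord0.
have hiid' := hiid; case: hiid' => mw _ _ hfin.
pose m2 := fun j : 'I_n => fine (\int[P]_om ((w 0%N om j 0) ^+ 2)%:E)%E.
have hm2 : forall t j, (\int[P]_om ((w t om j 0) ^+ 2)%:E = (m2 j)%:E)%E.
  move=> t j; rewrite (id_moment hiid) /m2 fineK //.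
  rewrite ge0_fin_numE ?hfin //.
  by apply: integral_ge0 => om _; rewrite lee_fin sqr_ge0.
have m20 : forall j, 0 <= m2 j.
  by move=> j; apply: fine_ge0; apply: integral_ge0 => om _; rewrite lee_fin sqr_ge0.
pose E := n%:R * \sum_j m2 j.
have E0 : 0 <= E by apply: mulr_ge0 => //; apply: sumr_ge0 => j0 _; exact: m20.
pose c0 := 2 * (Ca * (vn x0 + (mn B * (m%:R * Umax) + vn r))) ^+ 2.
pose c := 2 * mn F ^+ 2 * Ca.
have c00 : 0 <= c0 by rewrite mulr_ge0 ?sqr_ge0.
have c_0 : 0 <= c by rewrite mulr_ge0 // mulr_ge0 ?sqr_ge0.
exists (c0 + c * Ca * E) => t.
pose g := fun (k : 'I_t) om => n%:R * \sum_j (w (t - k.+1)%N om j 0) ^+ 2.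
have g0 : forall k om, 0 <= g k om by move=> k om; rewrite mulr_ge0 // sumr_ge0 // => *; rewrite sqr_ge0.
have mg : forall k, measurable_fun setT (g k).
  move=> k; apply: (@measurable_funM _ _ _ _ (cst n%:R) _ (measurable_cst _)).
  apply: measurable_sum => j; exact: measurable_funX.
have ig : forall k, (\int[P]_om (g k om)%:E = E%:E)%E.
  move=> k; rewrite /g /E.
  under eq_integral do rewrite mulr_sumr.
  rewrite (@int_lin _ _ _ P _ _ (fun _ => n%:R) (fun j om => (w (t - k.+1)%N om j 0) ^+ 2) m2) //.
  - by rewrite mulr_sumr.
  - by move=> *; rewrite sqr_ge0.
  - by move=> j; exact: measurable_funX.
pose al := fun k : 'I_t => mn (A ^+ k).
have mS : measurable_fun setT (fun om => \sum_k (c * al k) * g k om).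
  apply: measurable_sum => k.
  exact: (@measurable_funM _ _ _ _ (cst (c * al k)) (g k) (measurable_cst _) (mg k)).
have S0 : forall om, 0 <= \sum_k (c * al k) * g k om.
  by move=> om; apply: sumr_ge0 => k _; rewrite mulr_ge0 // mulr_ge0 // mn_ge0.
apply: (@le_trans _ _ (\int[P]_om (c0 + \sum_k (c * al k) * g k om)%:E)%E).
  apply: ge0_le_integral => //.
  - by move=> om _; rewrite lee_fin /sqnorm sumr_ge0 // => *; rewrite sqr_ge0.
  - apply/measurable_EFinP; apply: measurable_sum => i.
    apply: measurable_funX; exact: m_cl.
  - apply/measurable_EFinP.
    exact: (@measurable_funD _ _ _ _ (cst c0) _ (measurable_cst _) mS).
  - move=> om _; rewrite lee_fin.
    apply: (le_trans (pw_bound B F r w x0 U0 hU hAs t om)).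
    rewrite lerD2l /c mulr_sumr; apply: ler_sum => k _.
    by rewrite mulrA.
rewrite int_cst_plus //.
rewrite (@int_lin _ _ _ P _ _ (fun k => c * al k) g (fun _ => E)) //; last first.
  by move=> k; rewrite mulr_ge0 // mn_ge0.
rewrite -EFinD lee_fin lerD2l -mulr_suml -mulr_sumr.
by apply: ler_wpM2r => //; apply: ler_wpM2l => //; exact: hAs.
Qed.
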